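(* For $0<|q|<1$, the sequences $$\alpha_n=\frac{(-1)^n\left(q^{(-n^2+n+4)/2}(1-q^n)+q^{-n(n+5)/2}(1-q^{n+1})\right)}{1-q},\qquad\beta_n=\frac{(-1)^nq^{-n(n+5)/2}}{(q;q)_n}\qquad(n\ge0)$$ form a Bailey pair relative to $a=q$, i.e. $\beta_n=\sum_{r=0}^n\frac{\alpha_r}{(q;q)_{n-r}(q^2;q)_{n+r}}$ for all $n\ge0$.
   Context: $(a;q)_n=\prod_{k=0}^{n-1}(1-aq^k)$ with $(a;q)_0=1$. A Bailey pair relative to $a$ is a pair of sequences with $\beta_n=\sum_{r=0}^n\frac{\alpha_r}{(q;q)_{n-r}(aq;q)_{n+r}}$ for all $n\ge0$. *)

(* Defs.v *)
From HB Require Import structures.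
From mathcomp Require Import all_boot all_order all_algebra.
Set Implicit Arguments. Unset Strict Implicit. Unset Printing Implicit Defensive.
Import Order.TTheory GRing.Theory Num.Theory.
Local Open Scope ring_scope.

Definition qpoch (R : nzRingType) (a q : R) (n : nat) : R :=
  \prod_(k < n) (1 - a * q ^+ k).

Definition bailey_pair (R : fieldType) (a q : R) (alpha beta : nat -> R) : Prop :=
  forall n : nat,
    beta n = \sum_(r < n.+1)
               alpha r / (qpoch q q (n - r) * qpoch (a * q) q (n + r)).

(* Integer exponents: (-n^2+n+4)/2 = 2 - n(n-1)/2  and  -n(n+5)/2,
   both exact integers. *)
Definition expo1 (n : nat) : int := 2%:Z - ((n * n.-1)./2)%:Z.
Definition expo2 (n : nat) : int := - ((n * (n + 5))./2)%:Z.

Definition alpha11 (R : fieldType) (q : R) (n : nat) : R :=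
  (-1) ^+ n * (q ^ expo1 n * (1 - q ^+ n) + q ^ expo2 n * (1 - q ^+ n.+1))
  / (1 - q).

Definition beta11 (R : fieldType) (q : R) (n : nat) : R :=
  (-1) ^+ n * q ^ expo2 n / qpoch q q n.

(* Main.v *)
From HB Require Import structures.
From mathcomp Require Import all_boot all_order all_algebra.
From mathcomp Require Import ring lra zify.
Require Import Defs.
Set Implicit Arguments. Unset Strict Implicit. Unset Printing Implicit Defensive.
Import Order.TTheory GRing.Theory Num.Theory.
Local Open Scope ring_scope.

Definition ee (r : nat) : nat := (r * (r + 5))./2.
Definition tt (r : nat) : nat := (r * r.-1)./2.

Lemma eeS r : ee r.+1 = (ee r + r + 3)%N.
Proof. rewrite /ee -!divn2. have -> : (r.+1 * (r.+1 + 5) = r * (r + 5) + (r + 3) * 2)%N by ring.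
by rewrite divnDr ?dvdn_mull // mulnK // addnA. Qed.

Lemma eett r : ee r = (tt r + r * 3)%N.
Proof. rewrite /ee /tt -!divn2. case: r => [//|r] /=.
have -> : (r.+1 * (r.+1 + 5) = r.+1 * r + (r.+1 * 3) * 2)%N by ring.
rewrite divnDr ?dvdn_mull // mulnK //. Qed.

Section S.
Variable R : numFieldType.
Variable q : R.
Hypothesis hq0 : 0 < `|q|.
Hypothesis hq1 : `|q| < 1.

Lemma q_neq0 : q != 0. Proof. by rewrite -normr_gt0. Qed.

Lemma qk_neq0 k : q ^+ k != 0. Proof. exact: expf_neq0 q_neq0. Qed.

Lemma one_sub_neq0 k : (1 - q ^+ k.+1) != 0.
Proof.
rewrite subr_eq0 eq_sym; apply/negP => /eqP h.
have := congr1 Num.norm h; rewrite normrX normr1 => h2.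
have : `|q| ^+ k.+1 < 1 by rewrite exprn_ilt1.
by rewrite h2 ltxx.
Qed.

Local Notation P := (qpoch q q).

Lemma PS m : P m.+1 = P m * (1 - q ^+ m.+1).
Proof. by rewrite /qpoch big_ord_recr /= -exprS. Qed.

Lemma P_neq0 m : P m != 0.
Proof.
elim: m => [|m IH]; first by rewrite /qpoch big_ord0 oner_neq0.
by rewrite PS mulf_neq0 // one_sub_neq0.
Qed.

Lemma Pa m : qpoch (q * q) q m = P m.+1 / (1 - q).
Proof.
have h1 : (1 - q) != 0 by have := one_sub_neq0 0; rewrite expr1.
rewrite /qpoch big_ord_recl /= expr0 mulr1 [(1 - q) * _]mulrC mulfK //.
by apply: eq_bigr => i _; rewrite /bump /= add1n exprS mulrA.
Qed.

Lemma expo2E n : q ^ expo2 n = (q ^+ ee n)^-1.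
Proof. by rewrite /expo2 -invr_expz. Qed.

Lemma expo1E n : q ^ expo1 n = q ^+ 2 * (q ^+ ee n)^-1 * q ^+ (n * 3).
Proof.
rewrite /expo1 expfzDr ?q_neq0 // -invr_expz.
have -> : (n * n.-1)./2 = tt n by [].
rewrite eett exprD -!exprnP; field; by rewrite !qk_neq0.
Qed.


Lemma alphaE r : alpha11 q r = (-1) ^+ r * (q ^+ 2 * (q ^+ ee r)^-1 * q ^+ (r * 3) * (1 - q ^+ r)
   + (q ^+ ee r)^-1 * (1 - q ^+ r.+1)) / (1 - q).
Proof. by rewrite /alpha11 expo1E expo2E. Qed.

Definition f n r := alpha11 q r / (P (n - r) * qpoch (q * q) q (n + r)).
Definition G n r := (-1) ^+ r.+1 * (1 - q ^+ r) * (q ^+ ee r)^-1 / (P (n.+1 - r) * P (n + r + 2)) *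
  ((1 - q ^+ r.+1) * (q ^+ (n.+1 - r))^-1 + q ^+ (r * 3 + 2) * (1 - q ^+ n.+1)
   + q ^+ (r * 2) * (q ^+ (n.+1 - r))^-1 * (1 - q ^+ (n.+1 - r)) * (1 - q ^+ (n + r + 2))).

Ltac norm := repeat (rewrite exprD || rewrite exprM || rewrite exprS).
Ltac normH H := repeat (rewrite exprD in H || rewrite exprM in H || rewrite exprS in H).

Lemma step m r : (1 - q ^+ (m + r).+1) * f (m + r).+1 r + (q ^+ (m + r + 3))^-1 * f (m + r) r
   = G (m + r) r.+1 - G (m + r) r.
Proof.
rewrite /f /G alphaE !Pa.
have -> : ((m + r).+1 - r = m.+1)%N by lia.
have -> : ((m + r) - r = m)%N by lia.
have -> : ((m + r).+1 - r.+1 = m)%N by lia.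
have -> : (((m + r).+1 + r).+1 = (m + r + r).+2)%N by lia.
have -> : ((m + r + r.+1 + 2) = (m + r + r).+3)%N by lia.
have -> : ((m + r + r + 2) = (m + r + r).+2)%N by lia.
rewrite !PS eeS.
have n1 := one_sub_neq0 m.
have n2 := one_sub_neq0 (m + r + r).
have n3 := one_sub_neq0 (m + r + r).+1.
have n4 := one_sub_neq0 (m + r + r).+2.
have n5 := one_sub_neq0 0.
have n6 := P_neq0 m.
have n7 := P_neq0 (m + r + r).
have n8 := qk_neq0 m.
have n9 := qk_neq0 r.
have n10 := qk_neq0 (ee r).
have n11 := q_neq0.
norm. rewrite ?expr0 in n5 *. normH n1; normH n2; normH n3; normH n4.
set u := q ^+ m in n1 n2 n3 n4 n8 *.
set v := q ^+ r in n1 n2 n3 n4 n9 *.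
set w := q ^+ ee r in n10 *.
set P1 := P m in n6 *.
set P2 := P (m + r + r) in n7 *.
field. rewrite expr1 in n5.
by rewrite n1 n2 n3 n4 n5 n6 n7 n8 n9 n10 n11.
Qed.

Lemma P0 : P 0 = 1. Proof. by rewrite /qpoch big_ord0. Qed.

Lemma bound n : (1 - q ^+ n.+1) * f n.+1 n.+1 + G n n.+1 = 0.
Proof.
rewrite /f /G alphaE Pa !subnn P0 expr0 subrr.
have -> : ((n.+1 + n.+1).+1 = (n + n).+3)%N by lia.
have -> : ((n + n.+1 + 2) = (n + n).+3)%N by lia.
have n5 := one_sub_neq0 0.
have n7 := P_neq0 (n + n).+3.
have n8 := qk_neq0 n.
have n10 := qk_neq0 (ee n.+1).
have n11 := q_neq0.
set w := q ^+ ee n.+1 in n10 *.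
set Q := P (n + n).+3 in n7 *.
norm. rewrite ?expr0 in n5 *. rewrite expr1 in n5.
set u := q ^+ n in n8 *.
field.
by rewrite ?n5 ?n7 ?n8 ?n10 ?n11.
Qed.

Lemma step2 n r : (r <= n)%N ->
  (1 - q ^+ n.+1) * f n.+1 r + (q ^+ (n + 3))^-1 * f n r = G n r.+1 - G n r.
Proof.
move=> h; have [m ->] : exists m, n = (m + r)%N by exists (n - r)%N; rewrite subnK.
exact: step.
Qed.

Lemma G0 n : G n 0 = 0.
Proof. by rewrite /G expr0 subrr !(mulr0, mul0r). Qed.

Lemma mainS n : \sum_(r < n.+1) f n r = beta11 q n.
Proof.
elim: n => [|n IH].
  rewrite big_ord1 /f /beta11 alphaE expo2E /= P0 /qpoch !big_ord0.
  have : (1 - q) != 0 by have := one_sub_neq0 0; rewrite expr1.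
  move=> h. rewrite /ee /= !expr0 !expr1 invr1. field. exact: h.
have key : (1 - q ^+ n.+1) * (\sum_(r < n.+2) f n.+1 r) + (q ^+ (n + 3))^-1 * (\sum_(r < n.+1) f n r) = 0.
  rewrite big_ord_recr /= mulrDr -addrA [_ * f n.+1 n.+1 + _]addrC addrA !mulr_sumr -big_split /=.
  rewrite (eq_bigr (fun i : 'I_n.+1 => G n i.+1 - G n i)); last first.
    by move=> i _; rewrite step2 // -ltnS ltn_ord.
  rewrite -(big_mkord xpredT (fun i => G n i.+1 - G n i)) telescope_sumr // G0 subr0.
  by rewrite addrC bound.
move: key; rewrite IH; move: (\sum_(r < n.+2) f n.+1 r) => X hX.
have nz := one_sub_neq0 n.
have -> : X = ((1 - q ^+ n.+1) * X + (q ^+ (n + 3))^-1 * beta11 q n - (q ^+ (n + 3))^-1 * beta11 q n) / (1 - q ^+ n.+1).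
  by set B := beta11 q n; set x := (q ^+ (n+3))^-1; field; exact: nz.
rewrite hX sub0r /beta11 !expo2E eeS PS.
have n6 := P_neq0 n.
have n8 := qk_neq0 n.
have n10 := qk_neq0 (ee n).
have n11 := q_neq0.
set P1 := P n in n6 *.
norm. normH nz. rewrite ?expr0.
set w := q ^+ ee n in n10 *.
set u := q ^+ n in n8 nz *.
set s := (-1) ^+ n.
field.
by rewrite ?nz ?n6 ?n8 ?n10 ?n11.
Qed.
End S.

Theorem mainTheorem11 (R : numFieldType) (q : R)
    (hq0 : 0 < `|q|) (hq1 : `|q| < 1) :
  bailey_pair q q (alpha11 q) (beta11 q).
Proof. move=> n; symmetry; exact: (mainS hq0 hq1 n). Qed.
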